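(* Let $f:A\to B$ be a ring homomorphism, $\mathfrak b$ an ideal of $B$, and $A\bowtie^f\mathfrak b:=\{(a,f(a)+b): a\in A,\ b\in\mathfrak b\}\subseteq A\times B$. For a maximal ideal $\mathfrak m$ of $A$ let $S_{\mathfrak m}:=f(A\setminus\mathfrak m)+\mathfrak b$ and $\mathfrak b_{S_{\mathfrak m}}:=\mathfrak bB_{S_{\mathfrak m}}$. Assume $\mathfrak b_{S_{\mathfrak m}}=\{0\}$ for every maximal ideal $\mathfrak m$ of $A$ containing $f^{-1}(\mathfrak b)$. If $A$ is a semi-hereditary ring (resp. a semi-hereditary Noetherian ring), $B_{\mathfrak n}$ is a valuation domain for every maximal ideal $\mathfrak n$ of $B$ not containing $\mathfrak b$, and $\mathfrak b$ is a coherent $A$-module (resp. a finitely generated $A$-module) with the structure induced by $f$, then $A\bowtie^f\mathfrak b$ is a semi-hereditary ring.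
   Context: All rings are commutative with identity. A ring is semi-hereditary if every finitely generated ideal is projective. $\mathfrak b$ is an $A$-module via $a\cdot x=f(a)x$. A module is coherent if it is finitely generated and every finitely generated submodule is finitely presented. $B_{S_{\mathfrak m}}$ is the localization of $B$ at the multiplicative set $S_{\mathfrak m}$. *)

(* Defs.v *)
From HB Require Import structures.
From mathcomp Require Import all_boot all_order all_algebra.
From mathcomp Require Import ring.
Set Implicit Arguments. Unset Strict Implicit. Unset Printing Implicit Defensive.
Import Order.TTheory GRing.Theory Num.Theory.
Local Open Scope ring_scope.

Section Ideals.
Variable R : comPzRingType.

Definition is_ideal (I : R -> Prop) : Prop :=
  [/\ I 0, (forall x y, I x -> I y -> I (x - y)) & (forall r x, I x -> I (r * x))].

Definition maximal_ideal (m : R -> Prop) : Prop :=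
  [/\ is_ideal m, ~ m 1 &
      forall J : R -> Prop, is_ideal J -> (forall x, m x -> J x) ->
        (forall x, J x <-> m x) \/ J 1].

Definition fg_ideal (I : R -> Prop) : Prop :=
  exists s : seq R, forall x,
    I x <-> exists c : 'I_(size s) -> R, x = \sum_(i < size s) c i * s`_i.

Definition noetherian : Prop := forall I : R -> Prop, is_ideal I -> fg_ideal I.

Definition is_unit (x : R) : Prop := exists y, x * y = 1.

Definition valuation_domain : Prop :=
  [/\ (1 : R) != 0,
      (forall x y : R, x * y = 0 -> x = 0 \/ y = 0) &
      (forall x y : R, (exists z, y = x * z) \/ (exists z, x = y * z))].
End Ideals.

Section Modules.
Variables (R : comPzRingType) (V : lmodType R).

Definition submodule (P : V -> Prop) : Prop :=
  [/\ P 0, (forall x y, P x -> P y -> P (x + y)) & (forall r x, P x -> P (r *: x))].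

Definition in_span (s : seq V) (v : V) : Prop :=
  exists c : 'I_(size s) -> R, v = \sum_(i < size s) c i *: s`_i.

Definition fg_module (P : V -> Prop) : Prop :=
  exists s : seq V, forall v, P v <-> in_span s v.

Definition fin_presented (P : V -> Prop) : Prop :=
  exists s : seq V, (forall v, P v <-> in_span s v) /\
    exists t : seq 'rV[R]_(size s), forall c : 'rV[R]_(size s),
      (\sum_(i < size s) c ord0 i *: s`_i = 0) <->
      exists d : 'I_(size t) -> R, c = \sum_(j < size t) d j *: t`_j.

Definition coherent_module (P : V -> Prop) : Prop :=
  fg_module P /\
  forall Q : V -> Prop, submodule Q -> (forall v, Q v -> P v) ->
    fg_module Q -> fin_presented Q.

Definition linear_on (N : lmodType R) (P : V -> Prop) (h : V -> N) : Prop :=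
  (forall x y, P x -> P y -> h (x + y) = h x + h y) /\
  (forall r x, P x -> h (r *: x) = r *: h x).

Definition projective_module (P : V -> Prop) : Prop :=
  forall (M N : lmodType R) (g : {linear M -> N}) (h : V -> N),
    (forall y, exists x, g x = y) -> linear_on P h ->
    exists k : V -> M, linear_on P k /\ forall x, P x -> g (k x) = h x.
End Modules.

Definition semi_hereditary (R : comPzRingType) : Prop :=
  forall I : R -> Prop, fg_ideal I -> projective_module (V := R^o) I.

(* Localization, via its universal characterization:                  *)
Definition is_localization (B L : comPzRingType) (S : B -> Prop)
    (phi : {rmorphism B -> L}) : Prop :=
  [/\ (forall s, S s -> is_unit (phi s)),
      (forall x, phi x = 0 -> exists2 s, S s & s * x = 0) &
      (forall y : L, exists x s, S s /\ y * phi s = phi x)].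

Section Restriction.
Variables (A B : comPzRingType) (f : {rmorphism A -> B}).

Definition restr (g : {rmorphism A -> B}) : Type := B.
Local Notation M := (restr f).
HB.instance Definition _ := GRing.Zmodule.on M.
Definition restr_scale (a : A) (x : M) : M := (f a * (x : B) : B).

Fact restr_scalerA a b v : restr_scale a (restr_scale b v) = restr_scale (a * b) v.
Proof. by rewrite /restr_scale rmorphM mulrA. Qed.
Fact restr_scale1r : left_id 1 restr_scale.
Proof. by move=> x; rewrite /restr_scale rmorph1 mul1r. Qed.
Fact restr_scalerDr : right_distributive restr_scale +%R.
Proof. by move=> a x y; rewrite /restr_scale mulrDr. Qed.
Fact restr_scalerDl v : {morph restr_scale^~ v : a b / a + b}.
Proof. by move=> a b; rewrite /restr_scale rmorphD mulrDl. Qed.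

HB.instance Definition _ := GRing.Zmodule_isLmodule.Build A M
  restr_scalerA restr_scale1r restr_scalerDr restr_scalerDl.
End Restriction.
Arguments restr {A B} g.

Section Amalgamation.
Variables (A B : comPzRingType) (f : {rmorphism A -> B}) (b : {pred B}).
Hypothesis hb : is_ideal (fun x => x \in b).

Definition amalg_pred : {pred A * B} := [pred x | x.2 - f x.1 \in b].

Lemma amalg_pred_spec (x : A * B) :
  x \in amalg_pred <-> exists a c, c \in b /\ x = (a, f a + c).
Proof.
split.
  move=> hx; exists x.1, (x.2 - f x.1); split=> //.
  by case: x hx => u v /= _; rewrite addrC subrK.
by case=> a [c [hc ->]]; rewrite inE /= addrAC subrr add0r.
Qed.

Fact amalg_subring : subring_closed amalg_pred.
Proof.
case: hb => h0 hB hM; split.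
- by rewrite inE /= rmorph1 subrr.
- case=> [x1 x2] [y1 y2]; rewrite !inE /= => hx hy.
  have -> : x2 - y2 - f (x1 - y1) = (x2 - f x1) - (y2 - f y1).
    by rewrite rmorphB; ring.
  exact: (hB).
- case=> [x1 x2] [y1 y2]; rewrite !inE /= => hx hy.
  have -> : x2 * y2 - f (x1 * y1)
            = f x1 * (y2 - f y1) - (0 - (y2 * (x2 - f x1))).
    by rewrite rmorphM; ring.
  apply: (hB); first exact: (hM).
  by apply: (hB) => //; apply: (hM).
Qed.

HB.instance Definition _ := GRing.isSubringClosed.Build (A * B)%type amalg_pred
  amalg_subring.

Record amalg (hb0 : is_ideal (fun x => x \in b)) :=
  Amalg { amalg_val : A * B; amalg_valP : amalg_val \in amalg_pred }.
Local Notation T := (amalg hb).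
HB.instance Definition _ := [isSub for @amalg_val hb].
HB.instance Definition _ := [Choice of T by <:].
HB.instance Definition _ := GRing.SubChoice_isSubComPzRing.Build _ _ T amalg_subring.
End Amalgamation.

Arguments amalg {A B} f b _.

(* Main.v *)
Require Import Defs.
From HB Require Import structures.
From mathcomp Require Import all_boot all_order all_algebra.
From mathcomp Require Import ring boolp generic_quotient.
From mathcomp Require classical_sets.
Set Implicit Arguments. Unset Strict Implicit. Unset Printing Implicit Defensive.
Import GRing.Theory.
Local Open Scope ring_scope.

Local Open Scope quotient_scope.

Module Loc.
Section Loc.
Variables (B : comPzRingType) (S : B -> Prop).
Hypothesis S1 : S 1.
Hypothesis SM : forall a b, S a -> S b -> S (a * b).

Inductive ratio := mkRatio { frac :> B * B; _ : `[< S frac.2 >] }.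
HB.instance Definition _ := [isSub for frac].
HB.instance Definition _ := [Choice of ratio by <:].

Lemma denP (x : ratio) : S x.2. Proof. by case: x => [[a d]] /= /asboolP. Qed.
Lemma mkS a : S a -> `[< S a >]. Proof. by move=> h; apply/asboolP. Qed.
Lemma mkSM (x y : ratio) : `[< S (x.2 * y.2) >].
Proof. by apply/mkS/SM; apply: denP. Qed.

Definition equivf (x y : ratio) : bool :=
  `[< exists t, S t /\ t * (x.1 * y.2 - y.1 * x.2) = 0 >].

Lemma equivfP (x y : ratio) : reflect (exists t, S t /\ t * (x.1 * y.2 - y.1 * x.2) = 0)
  (equivf x y).
Proof. exact: asboolP. Qed.

Lemma equivf_refl : reflexive equivf.
Proof. by move=> x; apply/equivfP; exists 1; split=> //; ring. Qed.
Lemma equivf_sym : symmetric equivf.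
Proof.
suff h x y : equivf x y -> equivf y x by move=> x y; apply/idP/idP; apply: h.
move/equivfP=> [t [St h]]; apply/equivfP; exists t; split=> //.
by rewrite -[0]oppr0 -h; ring.
Qed.
Lemma equivf_trans : transitive equivf.
Proof.
move=> y x z /equivfP[t [St h1]] /equivfP[u [Su h2]]; apply/equivfP.
exists (t * u * y.2); split; first by apply: SM => //; [apply: SM|apply: denP].
have -> : t * u * y.2 * (x.1 * z.2 - z.1 * x.2) =
  u * z.2 * (t * (x.1 * y.2 - y.1 * x.2)) + t * x.2 * (u * (y.1 * z.2 - z.1 * y.2)).
  by ring.
by rewrite h1 h2; ring.
Qed.

Canonical equivf_equiv := EquivRel equivf equivf_refl equivf_sym equivf_trans.
Definition type := {eq_quot equivf}.
HB.instance Definition _ : EqQuotient _ equivf type := EqQuotient.on type.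
HB.instance Definition _ := Choice.on type.

Lemma eqmod_equiv (x y : ratio) : (\pi_type x = \pi_type y) <-> equivf x y.
Proof. by split=> [/eqmodP|h]; [|apply/eqmodP]. Qed.

Lemma reprE (x : ratio) : equivf (repr (\pi_type x)) x.
Proof. by apply/eqmod_equiv; rewrite reprK. Qed.

Definition mkR (a d : B) (h : S d) : ratio := @mkRatio (a, d) (mkS h).

Definition addf (x y : ratio) : ratio :=
  @mkRatio (x.1 * y.2 + y.1 * x.2, x.2 * y.2) (mkSM x y).
Definition oppf (x : ratio) : ratio := @mkRatio (- x.1, x.2) (mkS (denP x)).
Definition mulf (x y : ratio) : ratio :=
  @mkRatio (x.1 * y.1, x.2 * y.2) (mkSM x y).

Lemma addf_compat x x' y y' : equivf x x' -> equivf y y' ->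
  equivf (addf x y) (addf x' y').
Proof.
move=> /equivfP[t [St h1]] /equivfP[u [Su h2]]; apply/equivfP; exists (t * u).
split; first exact: SM. rewrite /=.
have -> : t * u * ((x.1 * y.2 + y.1 * x.2) * (x'.2 * y'.2) -
   (x'.1 * y'.2 + y'.1 * x'.2) * (x.2 * y.2)) =
   u * y.2 * y'.2 * (t * (x.1 * x'.2 - x'.1 * x.2)) +
   t * x.2 * x'.2 * (u * (y.1 * y'.2 - y'.1 * y.2)) by ring.
by rewrite h1 h2; ring.
Qed.
Lemma oppf_compat x x' : equivf x x' -> equivf (oppf x) (oppf x').
Proof.
move=> /equivfP[t [St h1]]; apply/equivfP; exists t; split=> //=.
by rewrite -[0]oppr0 -h1; ring.
Qed.
Lemma mulf_compat x x' y y' : equivf x x' -> equivf y y' ->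
  equivf (mulf x y) (mulf x' y').
Proof.
move=> /equivfP[t [St h1]] /equivfP[u [Su h2]]; apply/equivfP; exists (t * u).
split; first exact: SM. rewrite /=.
have -> : t * u * (x.1 * y.1 * (x'.2 * y'.2) - x'.1 * y'.1 * (x.2 * y.2)) =
   u * y.1 * y'.2 * (t * (x.1 * x'.2 - x'.1 * x.2)) +
   t * x'.1 * x.2 * (u * (y.1 * y'.2 - y'.1 * y.2)) by ring.
by rewrite h1 h2; ring.
Qed.

Definition add := lift_op2 type addf.
Lemma pi_add : {morph \pi : x y / addf x y >-> add x y}.
Proof.
move=> x y; unlock add; apply/eqmod_equiv; apply: addf_compat;
  by rewrite equivf_sym reprE.
Qed.
Canonical pi_add_morph := PiMorph2 pi_add.
Definition opp := lift_op1 type oppf.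
Lemma pi_opp : {morph \pi : x / oppf x >-> opp x}.
Proof.
move=> x; unlock opp; apply/eqmod_equiv; apply: oppf_compat;
  by rewrite equivf_sym reprE.
Qed.
Canonical pi_opp_morph := PiMorph1 pi_opp.
Definition mul := lift_op2 type mulf.
Lemma pi_mul : {morph \pi : x y / mulf x y >-> mul x y}.
Proof.
move=> x y; unlock mul; apply/eqmod_equiv; apply: mulf_compat;
  by rewrite equivf_sym reprE.
Qed.
Canonical pi_mul_morph := PiMorph2 pi_mul.

Definition zero : type := \pi_type (mkR 0 S1).
Definition one : type := \pi_type (mkR 1 S1).

Ltac eqt := apply/eqmod_equiv/equivfP; exists 1; split=> //=; ring.

Lemma addA : associative add.
Proof.
by elim/quotW=> x; elim/quotW=> y; elim/quotW=> z; rewrite !piE; eqt.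
Qed.
Lemma addC : commutative add.
Proof. by elim/quotW=> x; elim/quotW=> y; rewrite !piE; eqt. Qed.
Lemma add0_l : left_id zero add.
Proof. by elim/quotW=> x; rewrite /zero !piE; eqt. Qed.
Lemma addN_l : left_inverse zero opp add.
Proof. by elim/quotW=> x; rewrite /zero !piE; eqt. Qed.
HB.instance Definition _ := GRing.isZmodule.Build type addA addC add0_l addN_l.

Lemma mulA : associative mul.
Proof.
by elim/quotW=> x; elim/quotW=> y; elim/quotW=> z; rewrite !piE; eqt.
Qed.
Lemma mulC : commutative mul.
Proof. by elim/quotW=> x; elim/quotW=> y; rewrite !piE; eqt. Qed.
Lemma mul1_l : left_id one mul.
Proof. by elim/quotW=> x; rewrite /one !piE; eqt. Qed.
Lemma mul_addl : left_distributive mul add.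
Proof.
by elim/quotW=> x; elim/quotW=> y; elim/quotW=> z; rewrite !piE; eqt.
Qed.
HB.instance Definition _ :=
  GRing.Zmodule_isComPzRing.Build type mulA mulC mul1_l mul_addl.

Definition phi (x : B) : type := \pi_type (mkR x S1).

Lemma phi_zmod : zmod_morphism phi.
Proof.
move=> x y; rewrite /phi.
rewrite -[X in _ = _ + X]pi_opp -[RHS]pi_add; eqt.
Qed.
HB.instance Definition _ := GRing.isZmodMorphism.Build B type phi phi_zmod.
Lemma phi_monoid : monoid_morphism phi.
Proof.
split=> [//|x y]; rewrite /phi -[RHS]pi_mul; eqt.
Qed.
HB.instance Definition _ := GRing.isMonoidMorphism.Build B type phi phi_monoid.

Lemma phi_loc : is_localization S (phi : {rmorphism B -> type}).
Proof.
split.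
- move=> s Ss; exists (\pi_type (mkR 1 Ss)); rewrite /= /phi.
  rewrite -[_ * _]pi_mul; eqt.
- move=> x; rewrite /= /phi => h; have : equivf (mkR x S1) (mkR 0 S1).
    by apply/eqmod_equiv; exact: h.
  move/equivfP=> [t [St e]]; exists t => //; rewrite -e /=; ring.
- elim/quotW=> y; exists y.1, y.2; split; first exact: denP.
  rewrite /= /phi -[_ * _]pi_mul; eqt.
Qed.
Lemma ex_loc : exists (L : comPzRingType) (phi : {rmorphism B -> L}), is_localization S phi.
Proof. by exists type; exists (phi : {rmorphism B -> type}); apply: phi_loc. Qed.
End Loc.
End Loc.

Lemma exists_localization (B : comPzRingType) (S : B -> Prop) :
  S 1 -> (forall a b, S a -> S b -> S (a * b)) ->
  exists (L : comPzRingType) (phi : {rmorphism B -> L}), is_localization S phi.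
Proof. by move=> S1 SM; apply: Loc.ex_loc. Qed.


Section IdealBasics.
Variables (R : comPzRingType) (I : R -> Prop).
Hypothesis hI : is_ideal I.

Lemma I0 : I 0. Proof. by case: hI. Qed.
Lemma IB x y : I x -> I y -> I (x - y). Proof. by case: hI => _ h _; apply: h. Qed.
Lemma IM r x : I x -> I (r * x). Proof. by case: hI => _ _ h; apply: h. Qed.
Lemma IMr r x : I x -> I (x * r). Proof. by rewrite mulrC; apply: IM. Qed.
Lemma IN x : I x -> I (- x).
Proof. by move=> h; rewrite -sub0r; apply: IB => //; apply: I0. Qed.
Lemma ID x y : I x -> I y -> I (x + y).
Proof. by move=> h1 h2; rewrite -[y]opprK; apply: IB => //; apply: IN. Qed.
Lemma Isum n (F : 'I_n -> R) : (forall i, I (F i)) -> I (\sum_(i < n) F i).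
Proof.
move=> h; elim/big_rec: _ => [|i x _ hx]; first exact: I0.
by apply: ID.
Qed.
End IdealBasics.

Definition DB (R : comPzRingType) (I : R -> Prop) (s : seq R) :=
  exists psi : 'I_(size s) -> R -> R,
    (forall i, linear_on (V := R^o) (N := R^o) I (psi i)) /\
    forall x, I x -> x = \sum_(i < size s) psi i x * s`_i.

Section Proj.
Variables (R : comPzRingType) (I : R -> Prop) (s : seq R).
Hypothesis hI : is_ideal I.
Hypothesis hs : forall x, I x <-> exists c : 'I_(size s) -> R, x = \sum_(i < size s) c i * s`_i.

Lemma gen_in (i : 'I_(size s)) : I s`_i.
Proof.
apply/hs; exists (fun j => if j == i then 1 else 0).
rewrite (bigD1 i) //= eqxx mul1r big1 ?addr0 // => j /negbTE ->; exact: mul0r.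
Qed.

Lemma proj_of_DB : DB I s -> projective_module (V := R^o) I.
Proof.
move=> [psi [plin pdec]] M N g h gsurj [hadd hscal].
pose m i := proj1_sig (cid (gsurj (h s`_i))).
have hm i : g (m i) = h s`_i by rewrite /m; case: cid.
exists (fun x => \sum_(i < size s) psi i x *: m i); split.
  split.
  - move=> x y Ix Iy; rewrite -big_split /=; apply: eq_bigr => i _.
    by case: (plin i) => ha _; rewrite ha // scalerDl.
  - move=> r x Ix; rewrite scaler_sumr; apply: eq_bigr => i _.
    by case: (plin i) => _ hz; rewrite hz // scalerA.
move=> x Ix; rewrite linear_sum /=.
rewrite [in RHS](pdec x Ix).
have : I (\sum_(i < size s) psi i x * s`_i) /\
   h (\sum_(i < size s) psi i x * s`_i) = \sum_(i < size s) psi i x *: h s`_i.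
  elim/big_rec2: _ => [|i y1 y2 _ [Iy1 hy]].
    split; first exact: I0.
    have := hscal 0 0 (I0 hI); rewrite scale0r => ->; exact: scale0r.
  have Ii : I (psi i x * s`_i) by apply: IM => //; apply: gen_in.
  split; first exact: ID.
  by rewrite hadd // -hy; congr (_ + _); rewrite -hscal //; apply: gen_in.
move=> [_ ->]; apply: eq_bigr => i _; by rewrite linearZ /= hm.
Qed.

Definition pI : {pred R^o} := fun x => `[< I x >].
Lemma pI_closed : submod_closed pI.
Proof.
split; first by apply/asboolP; apply: I0.
move=> a u v /asboolP hu /asboolP hv; apply/asboolP; apply: ID => //.
exact: IM.
Qed.
HB.instance Definition _ := GRing.isSubmodClosed.Build R R^o pI
  (GRing.submod_closed_semi pI_closed).

Record subI := SubI { subI_val : R^o; _ : subI_val \in pI }.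
HB.instance Definition _ := [isSub for subI_val].
HB.instance Definition _ := [Choice of subI by <:].
HB.instance Definition _ := [SubChoice_isSubLmodule of subI by <:].

Lemma DB_of_proj : projective_module (V := R^o) I -> DB I s.
Proof.
move=> hp.
pose gf (v : 'rV[R]_(size s)) : subI :=
  insubd (0 : subI) (\sum_(i < size s) v ord0 i * s`_i : R^o).
have gval v : val (gf v) = \sum_(i < size s) v ord0 i * s`_i.
  by rewrite insubdK //; apply/asboolP/hs; exists (v ord0).
have glin : linear gf.
  move=> a u v; apply: val_inj; rewrite /= !gval.
  rewrite scaler_sumr -big_split /=; apply: eq_bigr => i _.
  by rewrite !mxE /= mulrDl -mulrA.
pose G : {linear 'rV[R]_(size s) -> subI} := HB.pack gf (GRing.isLinear.Build _ _ _ _ gf glin).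
pose h (x : R^o) : subI := insubd (0 : subI) x.
have hval x : I x -> val (h x) = x by move=> Ix; rewrite insubdK //; apply/asboolP.
have Gsurj : forall y, exists x, G x = y.
  move=> y; have : I (val y) by apply/asboolP; case: y.
  move/hs=> [c hc]; exists (\row_i c i); apply: val_inj.
  by rewrite /= gval hc; apply: eq_bigr => i _; rewrite mxE.
have hlin : linear_on (V := R^o) I h.
  split.
  - move=> x y Ix Iy; apply: val_inj; rewrite raddfD /= !hval //.
    exact: ID.
  - move=> r x Ix; apply: val_inj; rewrite linearZ /= !hval //.
    exact: IM.
have [k [[kadd kscal] kG]] := hp _ _ G h Gsurj hlin.
exists (fun i x => k x ord0 i); split.
  move=> i; split.
  - by move=> x y Ix Iy; rewrite kadd // mxE.
  - by move=> r x Ix; rewrite kscal // mxE.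
move=> x Ix; have := congr1 val (kG x Ix); rewrite /= gval => ->; rewrite hval //.
Qed.
End Proj.


Lemma exists_max (R : comPzRingType) (G : R -> Prop) :
  is_ideal G -> ~ G 1 -> exists P, maximal_ideal P /\ forall x, G x -> P x.
Proof.
move=> hG nG1.
pose Pd (X : R -> Prop) := (forall x, ~ X x) \/ [/\ is_ideal X, ~ X 1 & forall x, G x -> X x].
have [] := @classical_sets.Zorn_bigcup R Pd.
  move=> F FP Ftot.
  have [[X0 FX0 [y X0y]]|none] := pselect (exists2 X, F X & exists y, X y); last first.
    left=> x [X FX Xx]; apply: none; exists X => //; by exists x.
  have FI X : F X -> (exists y, X y) -> [/\ is_ideal X, ~ X 1 & forall x, G x -> X x].
    move=> /FP [h [z Xz]|//]; by case: (h z).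
  have [iX0 n0 G0] := FI X0 FX0 (ex_intro _ y X0y).
  have big2 X1 X2 x1 x2 : F X1 -> F X2 -> X1 x1 -> X2 x2 ->
      exists2 X, F X & [/\ X x1, X x2 & is_ideal X].
    move=> F1 F2 h1 h2; have [s12|s21] := Ftot _ _ F1 F2.
    - exists X2 => //; split => //; first exact: s12.
      by case: (FI _ F2 (ex_intro _ x2 h2)).
    - exists X1 => //; split => //; first exact: s21.
      by case: (FI _ F1 (ex_intro _ x1 h1)).
  right; split.
  - split.
    + by exists X0 => //; apply: I0.
    + move=> x z [X1 F1 h1] [X2 F2 h2].
      have [X FX [hx hz iX]] := big2 _ _ _ _ F1 F2 h1 h2.
      by exists X => //; apply: IB.
    + move=> r x [X FX Xx]; exists X => //.
      by case: (FI _ FX (ex_intro _ x Xx)) => iX _ _; apply: IM.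
  - move=> [X FX X1]; by case: (FI _ FX (ex_intro _ 1 X1)).
  - by move=> x Gx; exists X0 => //; apply: G0.
move=> A [PA Amax].
case: PA => [A0|[iA nA1 GA]].
  exfalso; apply: (Amax G); last by right.
  split; first by move=> x /A0.
  by move=> h; apply: (A0 0); apply: h; apply: I0.
exists A; split=> //; split=> // J iJ AJ.
have [J1|nJ1] := pselect (J 1); first by right.
left=> x; split; last exact: AJ.
move=> Jx; have [//|nAx] := pselect (A x); exfalso; apply: (Amax J); last first.
  by right; split=> // y Gy; apply: AJ; apply: GA.
split=> // h; exact: nAx (h x Jx).
Qed.


Lemma max_prime (R : comPzRingType) (m : R -> Prop) : maximal_ideal m ->
  forall x y, ~ m x -> ~ m y -> ~ m (x * y).
Proof.
move=> [im nm1 mmax] x y nx ny mxy.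
pose J z := exists p r, m p /\ z = p + r * x.
have iJ : is_ideal J.
  split.
  - by exists 0, 0; split; [apply: I0|ring].
  - move=> a b [p [r [mp ->]]] [p' [r' [mp' ->]]].
    by exists (p - p'), (r - r'); split; [apply: IB|ring].
  - move=> c a [p [r [mp ->]]]; exists (c * p), (c * r); split; first exact: IM.
    ring.
have [h|[p [r [mp e]]]] := mmax J iJ (fun z mz => ex_intro _ z (ex_intro _ 0 (conj mz (esym (etrans (congr1 (GRing.add z) (mul0r x)) (addr0 z)))))).
  by apply: nx; apply/h; exists 0, 1; split; [apply: I0|ring].
apply: ny; have -> : y = p * y + r * (x * y) by rewrite mulrA -mulrDl -e mul1r.
apply: ID => //; [exact: IMr | exact: IM].
Qed.

Section LocalGlobal.
Variable R : comPzRingType.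

Definition locV (P : R -> Prop) :=
  forall x y, exists s r, ~ P s /\ (s * x = r * y \/ s * y = r * x).
Definition locN (P : R -> Prop) :=
  forall x, (exists s, ~ P s /\ s * x = 0) \/
            (exists t, ~ P t /\ forall z, z * x = 0 -> t * z = 0).

Variables (I : R -> Prop) (s : seq R).
Hypothesis hs : forall x, I x <-> exists c : 'I_(size s) -> R, x = \sum_(i < size s) c i * s`_i.

Lemma hI : is_ideal I.
Proof.
split.
- by apply/hs; exists (fun _ => 0); rewrite big1 // => i _; rewrite mul0r.
- move=> x y /hs[c ->] /hs[d ->]; apply/hs; exists (fun i => c i - d i).
  by rewrite -sumrB; apply: eq_bigr => i _; rewrite mulrBl.
- move=> r x /hs[c ->]; apply/hs; exists (fun i => r * c i).
  by rewrite mulr_sumr; apply: eq_bigr => i _; rewrite mulrA.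
Qed.

Definition Gset (c : R) := exists psi : 'I_(size s) -> R -> R,
    (forall i, linear_on (V := R^o) (N := R^o) I (psi i)) /\
    forall x, I x -> c * x = \sum_(i < size s) psi i x * s`_i.

Lemma G_ideal : is_ideal Gset.
Proof.
split.
- exists (fun _ _ => 0); split.
    by move=> i; split => *; rewrite ?addr0 ?scaler0.
  by move=> x _; rewrite mul0r big1 // => i _; rewrite mul0r.
- move=> c d [p [pl pd]] [q [ql qd]]; exists (fun i x => p i x - q i x); split.
    move=> i; case: (pl i) => pa pz; case: (ql i) => qa qz; split.
    + by move=> x y Ix Iy; rewrite pa // qa //; ring.
    + move=> r x Ix; rewrite pz // qz //.
      by rewrite /GRing.scale /=; ring.
  move=> x Ix; rewrite mulrBl pd // qd // -sumrB; apply: eq_bigr => i _.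
  by rewrite mulrBl.
- move=> r c [p [pl pd]]; exists (fun i x => r * p i x); split.
    move=> i; case: (pl i) => pa pz; split.
    + by move=> x y Ix Iy; rewrite pa // mulrDr.
    + move=> a x Ix; rewrite pz //; rewrite /GRing.scale /=; ring.
  move=> x Ix; rewrite -mulrA pd // mulr_sumr; apply: eq_bigr => i _.
  by rewrite mulrA.
Qed.

Section LocalP.
Variable P : R -> Prop.
Hypothesis Pmax : maximal_ideal P.
Hypothesis PV : locV P.
Hypothesis PN : locN P.

Let Pp := max_prime Pmax.
Let nP1 : ~ P 1. Proof. by case: Pmax. Qed.

Lemma dominant (n0 : (0 < size s)%N) k :
  exists (j : 'I_(size s)) s0 (r : 'I_(size s) -> R), ~ P s0 /\
    forall i : 'I_(size s), (i < k)%N -> s0 * s`_i = r i * s`_j.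
Proof.
elim: k => [|k [j [s0 [r [ns0 hr]]]]].
  by exists (Ordinal n0), 1, (fun _ => 0).
have [kn|kn] := ltnP k (size s); last first.
  exists j, s0, r; split=> // i ik; apply: hr; exact: leq_trans (ltn_ord i) kn.
pose kk := Ordinal kn.
have [a [b [na [hab|hab]]]] := PV s`_kk s`_j.
- exists j, (a * s0), (fun i => if i == kk then s0 * b else a * r i); split.
    exact: Pp.
  move=> i; rewrite ltnS leq_eqVlt => /orP[/eqP ik|ik].
    have -> : i = kk by apply: val_inj.
    by rewrite eqxx mulrAC hab; ring.
  have -> : (i == kk) = false by apply/negbTE; apply/eqP => ikk; move: ik; rewrite ikk ltnn.
  by rewrite -mulrA hr // mulrA.
- exists kk, (a * s0), (fun i => if i == kk then a * s0 else r i * b); split.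
    exact: Pp.
  move=> i; rewrite ltnS leq_eqVlt => /orP[/eqP ik|ik].
    have -> : i = kk by apply: val_inj.
    by rewrite eqxx.
  have -> : (i == kk) = false by apply/negbTE; apply/eqP => ikk; move: ik; rewrite ikk ltnn.
  by rewrite -mulrA hr // mulrCA hab mulrA.
Qed.

Lemma sum_in (c : 'I_(size s) -> R) : I (\sum_(i < size s) c i * s`_i).
Proof. by apply/hs; exists c. Qed.

Lemma local_G : exists c, ~ P c /\ Gset c.
Proof.
have [n0|n0] := posnP (size s).
  exists 1; split=> //; exists (fun _ _ => 0); split.
    by move=> i; split => *; rewrite ?addr0 ?scaler0.
  move=> x /hs[c ->]; rewrite mul1r.
  by apply: eq_bigr => i; have := ltn_ord i; rewrite {2}n0.
have [j [s0 [r [ns0 hr]]]] := dominant n0 (size s).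
have hr' (i : 'I_(size s)) : s0 * s`_i = r i * s`_j by apply: hr.
have key (c : 'I_(size s) -> R) :
    (\sum_(i < size s) c i * r i) * s`_j = s0 * \sum_(i < size s) c i * s`_i.
  rewrite mulr_suml mulr_sumr; apply: eq_bigr => i _.
  by rewrite -mulrA -hr'; ring.
have [[s1 [ns1 e1]]|[t [nt ht]]] := PN s`_j.
  exists (s1 * s0); split; first exact: Pp.
  exists (fun _ _ => 0); split.
    by move=> i; split => *; rewrite ?addr0 ?scaler0.
  move=> x /hs[c ->]; rewrite [RHS]big1; last by move=> i _; rewrite mul0r.
  by rewrite -mulrA -key mulrCA e1 mulr0.
have cfex x : exists c : 'I_(size s) -> R, I x -> x = \sum_(i < size s) c i * s`_i.
  have [Ix|nIx] := pselect (I x); last by exists (fun _ => 0).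
  by have /hs[c hc] := Ix; exists c.
pose cf x := proj1_sig (cid (cfex x)).
have cfP x : I x -> x = \sum_(i < size s) cf x i * s`_i.
  by rewrite /cf; case: cid.
pose Phi x := t * \sum_(i < size s) cf x i * r i.
have wd (c d : 'I_(size s) -> R) :
    \sum_(i < size s) c i * s`_i = \sum_(i < size s) d i * s`_i ->
    t * \sum_(i < size s) c i * r i = t * \sum_(i < size s) d i * r i.
  move=> e; apply/eqP; rewrite -subr_eq0 -mulrBr; apply/eqP; apply: ht.
  rewrite -sumrB mulr_suml.
  have -> : \sum_(i < size s) (c i * r i - d i * r i) * s`_j =
     (\sum_(i < size s) c i * r i) * s`_j - (\sum_(i < size s) d i * r i) * s`_j.
    by rewrite !mulr_suml -sumrB; apply: eq_bigr => i _; rewrite mulrBl.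
  by rewrite !key e subrr.
exists (t * s0); split; first exact: Pp.
exists (fun i x => if i == j then Phi x else 0); split.
  move=> i; case: eqP => _; last by split => *; rewrite ?addr0 ?scaler0.
  split.
  - move=> x y Ix Iy; rewrite /Phi -mulrDr -big_split /=.
    have -> : \sum_(i0 < size s) (cf x i0 * r i0 + cf y i0 * r i0) =
              \sum_(i0 < size s) (cf x i0 + cf y i0) * r i0.
      by apply: eq_bigr => k _; rewrite mulrDl.
    apply: wd; rewrite -(cfP _ (ID hI Ix Iy)).
    have -> : \sum_(i0 < size s) (cf x i0 + cf y i0) * s`_i0 =
      \sum_(i0 < size s) cf x i0 * s`_i0 + \sum_(i0 < size s) cf y i0 * s`_i0.
      by rewrite -big_split /=; apply: eq_bigr => k _; rewrite mulrDl.
    by rewrite -(cfP x Ix) -(cfP y Iy).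
  - move=> a x Ix; rewrite /Phi.
    have -> : a *: (t * \sum_(i0 < size s) cf x i0 * r i0 : R^o) =
              t * \sum_(i0 < size s) (a * cf x i0) * r i0.
      by rewrite /GRing.scale /= mulrCA; congr (_ * _); rewrite mulr_sumr; apply: eq_bigr => k _; rewrite mulrA.
    apply: wd; rewrite -(cfP _ (IM hI a Ix)).
    have -> : \sum_(i0 < size s) (a * cf x i0) * s`_i0 =
      a * \sum_(i0 < size s) cf x i0 * s`_i0.
      by rewrite mulr_sumr; apply: eq_bigr => k _; rewrite mulrA.
    by rewrite -(cfP x Ix).
move=> x Ix; rewrite (bigD1 j) //= eqxx big1 ?addr0; last first.
  by move=> i /negbTE ->; rewrite mul0r.
by rewrite /Phi -[RHS]mulrA key mulrA -cfP.
Qed.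

End LocalP.

Lemma DB_local_global :
  (forall Q, maximal_ideal Q -> locV Q /\ locN Q) -> DB I s.
Proof.
move=> hloc; have [G1|nG1] := pselect (Gset 1).
  case: G1 => psi [pl pd]; exists psi; split => // x Ix; rewrite -pd //.
  by rewrite mul1r.
have [Q [Qm GQ]] := exists_max G_ideal nG1.
have [QV QN] := hloc Q Qm.
have [c [nc Gc]] := local_G Qm QV QN.
by case: nc; apply: GQ.
Qed.
End LocalGlobal.

Lemma sh_local (R : comPzRingType) :
  (forall Q : R -> Prop, maximal_ideal Q -> locV Q /\ locN Q) -> semi_hereditary R.
Proof.
move=> h I [s hs]; apply: (proj_of_DB (hI hs) hs).
exact: DB_local_global.
Qed.



Definition span (R : comPzRingType) (s : seq R) (x : R) :=
  exists c : 'I_(size s) -> R, x = \sum_(i < size s) c i * s`_i.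

Lemma sh_DB (R : comPzRingType) : semi_hereditary R -> forall s : seq R, DB (span s) s.
Proof.
move=> sh s; have hs : forall x, span s x <-> span s x by [].
apply: (DB_of_proj (hI hs) hs); apply: sh; by exists s.
Qed.

Lemma linon0 (R : comPzRingType) (I : R -> Prop) (f : R -> R) x :
  linear_on (V := R^o) (N := R^o) I f -> I x -> f 0 = 0.
Proof.
move=> [_ fz] Ix; have := fz 0 x Ix; by rewrite !scale0r.
Qed.

Lemma sh_ann (R : comPzRingType) : semi_hereditary R ->
  forall a : R, exists e, e * a = 0 /\ forall z, z * a = 0 -> z * e = z.
Proof.
move=> sh a; have [psi [pl pd]] := sh_DB sh [:: a].
have Ia : span [:: a] a.
  by exists (fun _ => 1); rewrite big_ord_recl big_ord0 /= mul1r addr0.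
have ea := pd a Ia; rewrite big_ord_recl big_ord0 addr0 /= in ea.
pose p := psi ord0 a.
exists (1 - p); split.
  by rewrite mulrBl mul1r -ea subrr.
move=> z za.
have : psi ord0 (z *: (a : R^o)) = z * p.
  by case: (pl ord0) => _ ->.
have -> : z *: (a : R^o) = 0 by exact: za.
rewrite (linon0 (pl ord0) Ia) => /esym zp.
by rewrite mulrBr mulr1 zp subr0.
Qed.

Lemma sh_val (R : comPzRingType) : semi_hereditary R ->
  forall m : R -> Prop, maximal_ideal m ->
  forall x y : R, exists s r, ~ m s /\ (s * x = r * y \/ s * y = r * x).
Proof.
move=> sh m mm a c; have [im nm1 _] := mm.
have [psi [pl pd]] := sh_DB sh [:: a; c].
have Ia : span [:: a; c] a.
  exists (fun i => if i == ord0 then 1 else 0).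
  by rewrite !big_ord_recl big_ord0 /= mul1r mul0r !addr0.
have Ic : span [:: a; c] c.
  exists (fun i => if i == ord0 then 0 else 1).
  by rewrite !big_ord_recl big_ord0 /= mul1r mul0r !addr0 add0r.
have ea := pd a Ia; have ec := pd c Ic.
rewrite !big_ord_recl big_ord0 addr0 /= in ea ec.
set i0 := ord0 in ea ec; set i1 := lift ord0 ord0 in ea ec.
have cross (i : 'I_2) : c * psi i a = a * psi i c.
  case: (pl i) => _ hz.
  have e1 : c * psi i a = psi i (c *: (a : R^o)) by rewrite hz.
  have e2 : a * psi i c = psi i (a *: (c : R^o)) by rewrite hz.
  rewrite e1 e2; congr (psi i _); exact: mulrC.
set al := psi i0 a in ea; set be := psi i1 a in ea.
set ga := psi i0 c in ec; set de := psi i1 c in ec.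
have h1 : c * al = a * ga by apply: cross.
have h2 : c * be = a * de by apply: cross.
have [mal|nal] := pselect (m al); last first.
  by exists al, ga; split => //; right; rewrite mulrC h1 mulrC.
have [mde|nde] := pselect (m de); last first.
  by exists de, be; split => //; left; rewrite mulrC -h2 mulrC.
exists (1 - al - de), 0; split.
  move=> h; apply: nm1; have -> : 1 = (1 - al - de) + (al + de) by ring.
  by apply: ID => //; apply: ID.
left; rewrite mul0r.
have -> : (1 - al - de) * a = a - (al * a + be * c) by rewrite (mulrC be) h2; ring.
by rewrite -ea subrr.
Qed.


Section Lin.
Variables (A : comPzRingType) (V : lmodType A).

Fixpoint lin (ws : seq V) (v : V) : Prop :=
  match ws with
  | [::] => v = 0
  | w :: ws' => exists a v', lin ws' v' /\ v = a *: w + v'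
  end.

Lemma lin0 ws : lin ws 0.
Proof. elim: ws => [|w ws IH] //=; exists 0, 0; split => //; by rewrite scale0r addr0. Qed.

Lemma linD ws u v : lin ws u -> lin ws v -> lin ws (u + v).
Proof.
elim: ws u v => [|w ws IH] u v /=; first by move=> -> ->; rewrite addr0.
move=> [a [u' [hu ->]]] [c [v' [hv ->]]]; exists (a + c), (u' + v'); split.
  exact: IH.
by rewrite scalerDl; rewrite addrACA.
Qed.

Lemma linZ ws r v : lin ws v -> lin ws (r *: v).
Proof.
elim: ws v => [|w ws IH] v /=; first by move=> ->; rewrite scaler0.
move=> [a [v' [hv ->]]]; exists (r * a), (r *: v'); split; first exact: IH.
by rewrite scalerDr scalerA.
Qed.

Lemma linN ws v : lin ws v -> lin ws (- v).
Proof. by move=> h; rewrite -scaleN1r; apply: linZ. Qed.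

Lemma lin_mem ws w : w \in ws -> lin ws w.
Proof.
elim: ws => [|w' ws IH] //=; rewrite inE => /orP[/eqP ->|h].
  by exists 1, 0; split; [apply: lin0|rewrite scale1r addr0].
by exists 0, w; split; [apply: IH|rewrite scale0r add0r].
Qed.

Lemma lin_cat ws1 ws2 u v : lin ws1 u -> lin ws2 v -> lin (ws1 ++ ws2) (u + v).
Proof.
elim: ws1 u => [|w ws IH] u /=; first by move=> ->; rewrite add0r.
move=> [a [u' [hu ->]]] hv; exists a, (u' + v); split; first exact: IH.
by rewrite addrA.
Qed.

Lemma lin_ind ws (P : V -> Prop) : P 0 -> (forall a w v, w \in ws -> P v -> P (a *: w + v)) ->
  forall v, lin ws v -> P v.
Proof.
move=> P0; elim: ws => [|w ws IH] PS v /=; first by move=> ->.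
move=> [a [v' [hv ->]]]; apply: (PS); first exact: mem_head.
have h2 : forall a' w' v'', w' \in ws -> P v'' -> P (a' *: w' + v'').
  by move=> a' w' v'' hw'; apply: PS; rewrite inE hw' orbT.
exact: IH h2 _ hv.
Qed.

Lemma lin_sub ws ws' : (forall w, w \in ws -> lin ws' w) -> forall v, lin ws v -> lin ws' v.
Proof.
move=> h; apply: lin_ind; first exact: lin0.
move=> a w v hw hv; apply: linD => //; apply: linZ; exact: h.
Qed.

Lemma lin_sum_seq (I : Type) (r : seq I) (F : I -> V) (c : I -> A) :
  lin [seq F i | i <- r] (\sum_(i <- r) c i *: F i).
Proof.
elim: r => [|i r IH] /=; first by rewrite big_nil.
by rewrite big_cons; exists (c i), (\sum_(j <- r) c j *: F j).
Qed.

Lemma lin_sum (n : nat) (F : 'I_n -> V) (c : 'I_n -> A) :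
  lin [seq F i | i <- index_enum 'I_n] (\sum_(i < n) c i *: F i).
Proof. exact: lin_sum_seq. Qed.



Lemma lin_span (s : seq V) v : in_span s v <-> lin s v.
Proof.
rewrite /in_span; elim: s v => [|w s IH] v /=.
  split; first by move=> [c ->]; rewrite big_ord0.
  by move=> ->; exists (fun _ => 0); rewrite big_ord0.
split.
  move=> [c ->]; rewrite big_ord_recl /=; exists (c ord0), (\sum_(i < size s) c (lift ord0 i) *: s`_i).
  split=> //; apply/IH; by exists (fun i => c (lift ord0 i)).
move=> [a [v' [/IH [c hc] ->]]].
exists (fun i => if unlift ord0 i is Some j then c j else a).
rewrite big_ord_recl /= unlift_none hc; congr (_ + _); apply: eq_bigr => i _.
by rewrite liftK.
Qed.
End Lin.

Lemma lin_map (A : comPzRingType) (V W : lmodType A) (g : V -> W) (ws : seq V) v :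
  (forall a x y, g (a *: x + y) = a *: g x + g y) -> g 0 = 0 ->
  lin ws v -> lin (map g ws) (g v).
Proof.
move=> hg g0; elim: ws v => [|w ws IH] v /=; first by move=> ->.
move=> [a [v' [hv ->]]]; exists a, (g v'); split; [exact: IH|exact: hg].
Qed.


Lemma killer (A B T : comPzRingType) (f : {rmorphism A -> B}) (nQ : T -> Prop)
  (g : T -> B) : nQ 1 -> (forall u v, nQ u -> nQ v -> nQ (u * v)) ->
  g 1 = 1 -> (forall u v, g (u * v) = g u * g v) ->
  forall ks : seq (restr f), (forall k, k \in ks -> exists v, nQ v /\ g v * k = 0) ->
  exists u, nQ u /\ forall c, lin ks c -> g u * c = 0.
Proof.
move=> n1 nM g1 gM; elim=> [|k ks IH] hk.
  by exists 1; split => // c /= ->; rewrite mulr0.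
have [v [nv hv]] := hk k (mem_head _ _).
have [u [nu hu]] : exists u, nQ u /\ forall c, lin ks c -> g u * c = 0.
  by apply: IH => k' hk'; apply: hk; rewrite inE hk' orbT.
exists (v * u); split; first exact: nM.
move=> c /= [a [c' [hc' ->]]].
rewrite gM mulrDr.
have -> : g v * g u * (a *: k) = f a * g u * (g v * k) :> B.
  rewrite -[a *: k]/(f a * (k : B)); move: (k : B) => k0; ring.
by rewrite hv mulr0 add0r -mulrA hu // mulr0.
Qed.

Section Main.
Variables (A B : comPzRingType) (f : {rmorphism A -> B}) (b : {pred B}).
Variable (hb : is_ideal (fun x => x \in b)).
Local Notation R := (amalg f b hb).

Hypothesis Hloc : forall m : A -> Prop, maximal_ideal m ->
     (forall a : A, f a \in b -> m a) ->
     forall (L : comPzRingType) (phi : {rmorphism B -> L}),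
       is_localization (fun y : B => exists a c, [/\ ~ m a, c \in b & y = f a + c]) phi ->
       forall c : B, c \in b -> phi c = 0.
Hypothesis Hval : forall n : B -> Prop, maximal_ideal n ->
     ~ (forall c : B, c \in b -> n c) ->
     forall (L : comPzRingType) (phi : {rmorphism B -> L}),
       is_localization (fun y : B => ~ n y) phi -> valuation_domain L.
Hypothesis shA : semi_hereditary A.
Hypothesis bfg : exists cs : seq (restr f), forall c : restr f, c \in b <-> lin cs c.
Hypothesis KF : forall y : B, exists ks : seq (restr f),
  (forall k, k \in ks -> k \in b /\ y * k = 0) /\
  forall c : restr f, c \in b -> y * c = 0 -> lin ks c.

Lemma v1M (x y : R) : (val (x * y)).1 = (val x).1 * (val y).1. Proof. by []. Qed.
Lemma v2M (x y : R) : (val (x * y)).2 = (val x).2 * (val y).2. Proof. by []. Qed.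
Lemma v1B (x y : R) : (val (x - y)).1 = (val x).1 - (val y).1. Proof. by []. Qed.
Lemma v2B (x y : R) : (val (x - y)).2 = (val x).2 - (val y).2. Proof. by []. Qed.
Lemma v1D (x y : R) : (val (x + y)).1 = (val x).1 + (val y).1. Proof. by []. Qed.
Lemma v2D (x y : R) : (val (x + y)).2 = (val x).2 + (val y).2. Proof. by []. Qed.
Lemma v10 : (val (0 : R)).1 = 0. Proof. by []. Qed.
Lemma v20 : (val (0 : R)).2 = 0. Proof. by []. Qed.
Lemma v11 : (val (1 : R)).1 = 1. Proof. by []. Qed.
Lemma v21 : (val (1 : R)).2 = 1. Proof. by []. Qed.

Let hbI : is_ideal (fun x => x \in b) := hb.
Lemma bmem x : (x \in b) = ((fun y => y \in b) x). Proof. by []. Qed.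

Lemma memR (x : R) : (val x).2 - f (val x).1 \in b.
Proof. by case: x. Qed.

Definition mk (a : A) (y : B) (h : y - f a \in b) : R := @Amalg A B f b hb (a, y) h.

Lemma fa_proof (a : A) : f a - f a \in b.
Proof. by rewrite subrr; apply: (I0 hb). Qed.
Definition fa (a : A) : R := mk (fa_proof a).

Lemma eqR (x y : R) : (val x).1 = (val y).1 -> (val x).2 = (val y).2 -> x = y.
Proof. by move=> h1 h2; apply: val_inj; case: (val x) (val y) h1 h2 => [? ?] [? ?] /= -> ->. Qed.

Lemma fst0_b (w : R) : (val w).1 = 0 -> (val w).2 \in b.
Proof. by move=> h; have := memR w; rewrite h rmorph0 subr0. Qed.

Lemma maxP (Q : R -> Prop) : maximal_ideal Q -> forall u v, Q (u * v) -> ~ Q v -> Q u.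
Proof.
move=> Qm u v h nv; have [//|nu] := pselect (Q u).
by case: (max_prime Qm nu nv).
Qed.

Section Case2.
Variable Q : R -> Prop.
Hypothesis Qm : maximal_ideal Q.
Hypothesis Qb : forall w : R, (val w).1 = 0 -> Q w.

Let iQ : is_ideal Q. Proof. by case: Qm. Qed.
Let nQ1 : ~ Q 1. Proof. by case: Qm. Qed.
Let Qp := max_prime Qm.

Definition m2 (a : A) := Q (fa a).

Lemma key2 (x : R) : Q x <-> m2 (val x).1.
Proof.
have e : x = fa (val x).1 + (x - fa (val x).1) by rewrite addrC subrK.
have h : Q (x - fa (val x).1) by apply: Qb; rewrite v1B /= subrr.
split=> hx; rewrite /m2 in hx *.
  have -> : fa (val x).1 = x - (x - fa (val x).1) by rewrite opprB addrC subrK.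
  exact: IB.
by rewrite e; apply: ID.
Qed.

Lemma m2_max : maximal_ideal m2.
Proof.
split.
- split.
  + rewrite /m2; have -> : fa 0 = 0 by apply: eqR; rewrite //= rmorph0.
    exact: I0.
  + move=> x y hx hy; rewrite /m2.
    have -> : fa (x - y) = fa x - fa y by apply: eqR; rewrite //= rmorphB.
    exact: IB.
  + move=> r x hx; rewrite /m2.
    have -> : fa (r * x) = fa r * fa x by apply: eqR; rewrite //= rmorphM.
    exact: IM.
- rewrite /m2; have -> : fa 1 = 1 by apply: eqR; rewrite //= rmorph1.
  exact: nQ1.
move=> J iJ mJ.
pose Q' (x : R) := J (val x).1.
have iQ' : is_ideal Q'.
  split; rewrite /Q'.
  - exact: (I0 iJ).
  - by move=> x y hx hy; rewrite v1B; apply: IB.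
  - by move=> r x hx; rewrite v1M; apply: IM.
have [h|h] := (let: And3 _ _ mx := Qm in mx) Q' iQ' (fun x hx => mJ _ ((key2 x).1 hx)).
  by left=> a; split => [Ja|]; [apply/(h (fa a)) | apply: mJ].
by right.
Qed.

Lemma nQM u v : ~ Q u -> ~ Q v -> ~ Q (u * v).
Proof. exact: Qp. Qed.

Lemma case2_killer : exists u, ~ Q u /\ forall w : R, (val w).1 = 0 -> u * w = 0.
Proof.
have [cs hcs] := bfg.
have pc : forall c, c \in cs -> exists v, ~ Q v /\ (val v).2 * c = 0.
  move=> c ccs; have cb : c \in b by apply/hcs; apply: lin_mem.
  have [[a0 [fa0 na0]]|nex] := pselect (exists a0, f a0 \in b /\ ~ m2 a0).
    have pr : 0 - f a0 \in b by rewrite sub0r; apply: (IN hb).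
    exists (mk pr); split; last by rewrite /= mul0r.
    by move/key2.
  have hIm : forall a, f a \in b -> m2 a.
    move=> a fab; have [//|na] := pselect (m2 a); case: nex; by exists a.
  pose S := fun y : B => exists a c, [/\ ~ m2 a, c \in b & y = f a + c].
  have S1 : S 1.
    exists 1, 0; split; [by case: m2_max | exact: (I0 hb) | by rewrite rmorph1 addr0].
  have SM : forall x y, S x -> S y -> S (x * y).
    move=> x y [a [d [na db1 ->]]] [a' [d' [na' db' ->]]].
    exists (a * a'), (f a * d' + d * f a' + d * d'); split.
    - exact: (max_prime m2_max).
    - by apply: (ID hb); [apply: (ID hb)|]; [apply: (IM hb)|apply: (IMr hb)|apply: (IM hb)].
    - by rewrite rmorphM; ring.
  have [L [phi loc]] := exists_localization S1 SM.
  have := Hloc m2_max hIm loc cb.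
  case: loc => _ ker _ /ker [s [a [d [na db ->]]] e].
  have pr : f a + d - f a \in b by rewrite addrC addKr.
  exists (mk pr); split; first by move/key2.
  exact: e.
have [u [nu hu]] := @killer A B R f (fun v => ~ Q v) (fun v => (val v).2) nQ1 nQM
   (erefl _) (fun _ _ => erefl _) cs pc.
exists u; split => // w w1; apply: eqR; first by rewrite v1M w1 mulr0.
by rewrite v2M v20; apply: hu; apply/hcs; apply: fst0_b.
Qed.

Lemma case2_loc : locV Q /\ locN Q.
Proof.
have [u [nu hu]] := case2_killer.
have nfa a : ~ m2 a -> ~ Q (fa a) by [].
split.
  move=> x x'; have [s [r [ns hsr]]] := sh_val shA m2_max (val x).1 (val x').1.
  case: hsr => e.
    exists (u * fa s), (u * fa r); split; first exact: nQM.
    left; have -> : u * fa s * x = u * (fa r * x') + u * (fa s * x - fa r * x').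
      by rewrite mulrBr addrC subrK mulrA.
    rewrite [u * (_ - _)]hu ?addr0 ?mulrA //.
    by rewrite v1B !v1M /= e subrr.
  exists (u * fa s), (u * fa r); split; first exact: nQM.
  right; have -> : u * fa s * x' = u * (fa r * x) + u * (fa s * x' - fa r * x).
    by rewrite mulrBr addrC subrK mulrA.
  rewrite [u * (_ - _)]hu ?addr0 ?mulrA //.
  by rewrite v1B !v1M /= e subrr.
move=> x; have [e [ea he]] := sh_ann shA (val x).1.
have [me|nme] := pselect (m2 e); last first.
  left; exists (u * fa e); split; first exact: nQM.
  by rewrite -mulrA hu // v1M /= ea.
right; exists (u * fa (1 - e)); split.
  apply: nQM => // h; have [im2 nm1 _] := m2_max; apply: nm1.
  have -> : 1 = e + (1 - e) by rewrite addrC subrK.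
  exact: ID.
move=> z zx; rewrite -mulrA hu // v1M /=.
have : (val (z * x)).1 = 0 by rewrite zx.
rewrite v1M => /he ze.
by rewrite mulrBl mul1r mulrC ze subrr.
Qed.
End Case2.

Section Case1.
Variable Q : R -> Prop.
Hypothesis Qm : maximal_ideal Q.
Variable c0 : B.
Hypothesis c0b : c0 \in b.

Let iQ : is_ideal Q. Proof. by case: Qm. Qed.
Let Qp := max_prime Qm.

Lemma zbm_proof y : y * c0 - f 0 \in b.
Proof. by rewrite rmorph0 subr0; apply: (IM hb). Qed.
Definition zbm y : R := mk (zbm_proof y).

Hypothesis nQc0 : ~ Q (zbm 1).

Definition n1 y := Q (zbm y).

Lemma key1 (x : R) : Q x <-> n1 (val x).2.
Proof.
have e : x * zbm 1 = zbm (val x).2.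
  by apply: eqR; rewrite ?v1M ?v2M /= ?mulr0 // mul1r.
rewrite /n1 -e; split => h; first exact: IMr.
exact: maxP h nQc0.
Qed.

Lemma n1_max : maximal_ideal n1.
Proof.
split.
- split; rewrite /n1.
  + have -> : zbm 0 = 0 by apply: eqR; rewrite //= mul0r.
    exact: I0.
  + move=> x y hx hy.
    have -> : zbm (x - y) = zbm x - zbm y by apply: eqR; rewrite //= ?subrr // mulrBl.
    exact: IB.
  + move=> r x hx; apply: (maxP Qm _ nQc0).
    have -> : zbm (r * x) * zbm 1 = zbm r * zbm x.
      by apply: eqR; rewrite ?v1M ?v2M //= ?mulr0 //; ring.
    exact: IM.
- exact: nQc0.
move=> J iJ mJ.
pose Q' (x : R) := J (val x).2.
have iQ' : is_ideal Q'.
  split; rewrite /Q'.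
  - exact: (I0 iJ).
  - by move=> x y hx hy; rewrite v2B; apply: IB.
  - by move=> r x hx; rewrite v2M; apply: IM.
have [h|h] := (let: And3 _ _ mx := Qm in mx) Q' iQ' (fun x hx => mJ _ ((key1 x).1 hx)).
  left=> y; split => [Jy|]; last exact: mJ.
  apply/(h (zbm y)); rewrite /Q' /=; exact: IMr.
by right.
Qed.

Lemma n1_nb : ~ (forall c, c \in b -> n1 c).
Proof.
move=> h; apply: nQc0; apply: (maxP Qm _ nQc0).
have -> : zbm 1 * zbm 1 = zbm c0 by apply: eqR; rewrite ?v1M ?v2M //= ?mulr0 //; ring.
exact: h.
Qed.

Let Sn := fun y : B => ~ n1 y.
Let Sn1 : Sn 1. Proof. exact: nQc0. Qed.
Let SnM : forall x y, Sn x -> Sn y -> Sn (x * y). Proof. exact: max_prime n1_max. Qed.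

Lemma case1_B : (forall y y' : B, exists s r, ~ n1 s /\ (s * y = r * y' \/ s * y' = r * y)) /\
  (forall y : B, (exists s, ~ n1 s /\ s * y = 0) \/
     (forall z, z * y = 0 -> exists s, ~ n1 s /\ s * z = 0)).
Proof.
have [L [phi loc]] := exists_localization Sn1 SnM.
have [n10 integ divi] := Hval n1_max n1_nb loc.
case: loc => _ ker surj.
have hdiv y y' z : phi y' = phi y * z -> exists s r, ~ n1 s /\ s * y' = r * y.
  move=> e; have [w [s [Ss hs]]] := surj z.
  have : phi (y' * s - y * w) = 0.
    by rewrite rmorphB !rmorphM e -hs mulrA subrr.
  move/ker => [s' Ss' e'].
  exists (s' * s), (s' * w); split; first exact: SnM.
  by apply/eqP; rewrite -subr_eq0; apply/eqP; rewrite -e'; ring.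
split.
  move=> y y'; case: (divi (phi y) (phi y')) => [[z e]|[z e]].
    by have [s [r [ns hs]]] := hdiv _ _ _ e; exists s, r; split => //; right.
  by have [s [r [ns hs]]] := hdiv _ _ _ e; exists s, r; split => //; left.
move=> y; have [py|py] := pselect (phi y = 0).
  by left; have [s Ss hs] := ker _ py; exists s.
right=> z zy; have : phi z * phi y = 0 by rewrite -rmorphM zy rmorph0.
move/integ => [pz|//]; by have [s Ss hs] := ker _ pz; exists s.
Qed.

Lemma case1_loc : locV Q /\ locN Q.
Proof.
have [VB NB] := case1_B.
split.
  move=> x x'; have [s [r [ns [e|e]]]] := VB (val x).2 (val x').2.
    exists (zbm s), (zbm r); split => //; left.
    by apply: eqR; rewrite ?v1M ?v2M //= ?mul0r // mulrAC e mulrAC.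
  exists (zbm s), (zbm r); split => //; right.
  by apply: eqR; rewrite ?v1M ?v2M //= ?mul0r // mulrAC e mulrAC.
move=> x; case: (NB (val x).2) => [[s [ns e]]|hz].
  left; exists (zbm s); split => //.
  by apply: eqR; rewrite ?v1M ?v2M //= ?mul0r // mulrAC e mul0r.
right; have [ks [hks kin]] := KF (val x).2.
have pc : forall k, k \in ks -> exists v, ~ n1 v /\ id v * k = 0.
  move=> k kk; have [_ yk] := hks k kk.
  by apply: hz; rewrite mulrC.
have [u [nu hu]] := @killer A B B f (fun v => ~ n1 v) id Sn1 SnM
   (erefl _) (fun _ _ => erefl _) ks pc.
exists (zbm u); split => // z zx.
have z2 : (val z).2 * (val x).2 = 0 by rewrite -v2M zx.
apply: eqR; rewrite ?v1M ?v2M //= ?mul0r //.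
rewrite -mulrA; apply: hu; apply: kin.
  by apply: (IMr hb).
by rewrite mulrCA [_ * (amalg_val z).2]mulrC z2 mulr0.
Qed.
End Case1.

Lemma main_sh : semi_hereditary R.
Proof.
apply: sh_local => Q Qm.
have [h|h] := pselect (forall w : R, (val w).1 = 0 -> Q w).
  exact: case2_loc.
have [w [w1 nw]] : exists w : R, (val w).1 = 0 /\ ~ Q w.
  apply: contrapT => nex; apply: h => w w1; apply: contrapT => nw.
  by apply: nex; exists w.
have wb := fst0_b w1.
apply: (@case1_loc Q Qm (val w).2 wb).
have -> : zbm wb 1 = w by apply: eqR; rewrite //= ?w1 // mul1r.
exact: nw.
Qed.
End Main.


Lemma sub_B (A : comPzRingType) (V : lmodType A) (N : V -> Prop) :
  submodule N -> forall x y, N x -> N y -> N (x - y).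
Proof.
move=> [N0 ND NZ] x y hx hy; rewrite -scaleN1r; apply: ND => //; exact: NZ.
Qed.

Lemma noeth_sub (A : comPzRingType) : noetherian A ->
  forall k (N : 'rV[A]_k -> Prop), submodule N ->
  exists ws, (forall w, w \in ws -> N w) /\ forall v, N v -> lin ws v.
Proof.
move=> noe k N sN.
have [N0 ND NZ] := sN.
pose Nj j v := N v /\ forall i : 'I_k, (j <= i)%N -> v ord0 i = 0.
suff : forall j, (j <= k)%N -> exists ws, (forall w, w \in ws -> Nj j w) /\
   forall v, Nj j v -> lin ws v.
  move=> /(_ k (leqnn k)) [ws [h1 h2]]; exists ws; split.
    by move=> w /h1 [].
  move=> v Nv; apply: h2; split => // i; by rewrite leqNgt ltn_ord.
elim=> [_|j IH jk].
  exists [::]; split => // v [_ hv] /=.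
  by apply/rowP => i; rewrite hv // mxE.
have [ws [ws1 ws2]] := IH (ltnW jk).
pose jj := Ordinal jk.
pose J a := exists v, Nj j.+1 v /\ v ord0 jj = a.
have iJ : is_ideal J.
  split.
  - by exists 0; split; [split => // i _; rewrite mxE|rewrite mxE].
  - move=> x y [v [[Nv hv] <-]] [w [[Nw hw] <-]]; exists (v - w); split.
      split; first exact: sub_B.
      by move=> i ji; rewrite !mxE hv // hw // subrr.
    by rewrite !mxE.
  - move=> r x [v [[Nv hv] <-]]; exists (r *: v); split.
      split; first exact: NZ.
      by move=> i ji; rewrite !mxE hv // mulr0.
    by rewrite !mxE.
have [gs hgs] := noe J iJ.
have gin (i : 'I_(size gs)) : J gs`_i.
  apply/hgs; exists (fun j => if j == i then 1 else 0).
  rewrite (bigD1 i) //= eqxx mul1r big1 ?addr0 // => j' /negbTE ->; exact: mul0r.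
pose w i := proj1_sig (cid (gin i)).
have wP i : Nj j.+1 (w i) /\ (w i) ord0 jj = gs`_i by rewrite /w; case: cid => ? [].
exists ([seq w i | i <- index_enum 'I_(size gs)] ++ ws); split.
  move=> x; rewrite mem_cat => /orP[/mapP[i _ ->]|/ws1 [Nx hx]].
    by case: (wP i).
  split => // i ji; apply: hx; exact: ltnW.
move=> v [Nv hv].
have : J (v ord0 jj) by exists v; split.
move/hgs => [c hc].
have -> : v = \sum_(i < size gs) c i *: w i + (v - \sum_(i < size gs) c i *: w i).
  by rewrite addrC subrK.
apply: lin_cat; first exact: lin_sum.
have Nsum : forall (F : 'I_(size gs) -> 'rV[A]_k), (forall i, N (F i)) -> N (\sum_i F i).
  by move=> F hF; elim/big_rec: _ => // i x _ hx; apply: ND.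
apply: ws2; split.
  apply: sub_B => //; apply: Nsum => i; apply: NZ; by case: (wP i) => [[]].
move=> i; rewrite leq_eqVlt => /orP[/eqP ji|ji].
  have -> : i = jj by apply: val_inj.
  rewrite !mxE summxE hc; apply/eqP; rewrite subr_eq0; apply/eqP.
  by apply: eq_bigr => i' _; rewrite [RHS]mxE (proj2 (wP i')).
rewrite !mxE summxE hv // big1 ?subr0 // => i' _.
by rewrite [LHS]mxE (proj2 (proj1 (wP i'))) // mulr0.
Qed.


Section KF.
Variables (A B : comPzRingType) (f : {rmorphism A -> B}) (b : {pred B}).
Variable (hb : is_ideal (fun x => x \in b)).
Local Notation M := (restr f).

Lemma sE a (v : M) : a *: v = f a * (v : B). Proof. by []. Qed.

Lemma lin_b (cs : seq M) : (forall c, c \in cs -> c \in b) -> forall v, lin cs v -> v \in b.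
Proof.
move=> h; apply: lin_ind; first exact: (I0 hb).
move=> a w v hw hv; rewrite sE; apply: (ID hb) => //; apply: (IM hb); exact: h.
Qed.

Lemma lin_mul (cs : seq M) (y : B) v : lin [seq (y * c : M) | c <- cs] v ->
  exists z, lin cs z /\ v = y * z.
Proof.
elim: cs v => [|c cs IH] v /=; first by move=> ->; exists 0; rewrite mulr0.
move=> [a [v' [hv ->]]]; have [z [hz ->]] := IH _ hv.
exists (a *: c + z); split; first by exists a, z.
by rewrite !sE mulrDr mulrCA.
Qed.

Lemma in_b_sum n (F : 'I_n -> B) : (forall i, F i \in b) -> \sum_(i < n) F i \in b.
Proof. exact: (Isum hb). Qed.

Lemma KF_coh : coherent_module (V := M) (fun x : M => x \in b) ->
  forall y : B, exists ks : seq M,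
  (forall k, k \in ks -> k \in b /\ y * k = 0) /\
  forall c : M, c \in b -> y * c = 0 -> lin ks c.
Proof.
move=> [[cs hcs] coh] y.
have hcsl : forall c, c \in b <-> lin cs c by move=> c; rewrite -lin_span.
have csb : forall c, c \in cs -> c \in b by move=> c hc; apply/hcsl/lin_mem.
pose u := [seq (y * c : M) | c <- cs].
pose Q := lin u.
have subQ : submodule Q.
  by split; [apply: lin0 | apply: linD | move=> r x; apply: linZ].
have Qb : forall v, Q v -> v \in b.
  apply: lin_b => w /mapP [c hc ->]; apply: (IM hb); exact: csb.
have [s' [hs' [t ht]]] := coh Q subQ Qb (ex_intro _ u (fun v => iff_sym (lin_span u v))).
have zex (j : 'I_(size s')) : exists z, lin cs z /\ s'`_j = y * z.
  apply: lin_mul; apply/hs'; exists (fun i => if i == j then 1 else 0).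
  rewrite (bigD1 j) //= eqxx scale1r big1 ?addr0 // => i /negbTE ->.
  exact: scale0r.
pose z j := proj1_sig (cid (zex j)).
have zP j : lin cs (z j) /\ s'`_j = y * z j by rewrite /z; case: cid.
have zb j : z j \in b by apply/hcsl; case: (zP j).
have aex (i : 'I_(size cs)) : exists al : 'I_(size s') -> A,
    y * cs`_i = \sum_(j < size s') al j *: s'`_j.
  apply/hs'; apply: lin_mem; apply/mapP; exists cs`_i => //; exact: mem_nth.
pose al i := proj1_sig (cid (aex i)).
have alP (i : 'I_(size cs)) : y * cs`_i = \sum_(j < size s') al i j *: s'`_j by rewrite /al; case: cid.
pose ka (i : 'I_(size cs)) : M := cs`_i - \sum_(j < size s') al i j *: z j.
pose la (m : 'I_(size t)) : M := \sum_(j < size s') t`_m ord0 j *: z j.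
exists ([seq ka i | i <- index_enum 'I_(size cs)] ++ [seq la m | m <- index_enum 'I_(size t)]).
split.
  move=> kk; rewrite mem_cat => /orP[/mapP[i _ ->]|/mapP[m _ ->]].
  - split.
      apply: (IB hb); first by apply: csb; apply: mem_nth.
      by apply: in_b_sum => j; rewrite sE; apply: (IM hb).
    rewrite mulrBr alP mulr_sumr; apply/eqP; rewrite subr_eq0; apply/eqP.
    by apply: eq_bigr => j _; rewrite !sE (proj2 (zP j)) mulrCA.
  - split; first by apply: in_b_sum => j; rewrite sE; apply: (IM hb).
    have ex : exists d : 'I_(size t) -> A, t`_m = \sum_(j < size t) d j *: t`_j.
      exists (fun k => if k == m then 1 else 0).
      rewrite (bigD1 m) //= eqxx scale1r big1 ?addr0 // => k /negbTE ->.
      exact: scale0r.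
    have h0 := (ht t`_m).2 ex; rewrite mulr_sumr -[RHS]h0.
    by apply: eq_bigr => j _; rewrite !sE (proj2 (zP j)) mulrCA.
move=> c cb yc.
have [a ha] : in_span cs c by apply/lin_span/hcsl.
pose e := \row_(j < size s') \sum_(i < size cs) a i * al i j.
have [d hd] : exists d, e = \sum_(k < size t) d k *: t`_k.
  apply/ht; rewrite -[RHS]yc ha mulr_sumr.
  have -> : \sum_(i < size s') e ord0 i *: s'`_i =
     \sum_(i < size s') \sum_(k < size cs) a k *: (al k i *: s'`_i).
    apply: eq_bigr => j _; rewrite mxE scaler_suml; apply: eq_bigr => k _.
    by rewrite scalerA.
  rewrite exchange_big /=; apply: eq_bigr => k _.
  by rewrite sE -[in RHS]mulrCA alP -scaler_sumr.
pose E := \sum_(j < size s') e ord0 j *: z j.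
have e1 : \sum_(i < size cs) a i *: ka i = c - E.
  have -> : \sum_(i < size cs) a i *: ka i = \sum_(i < size cs) a i *: cs`_i -
      \sum_(i < size cs) \sum_(j < size s') a i *: (al i j *: z j).
    by rewrite -sumrB; apply: eq_bigr => i _; rewrite /ka scalerBr scaler_sumr.
  rewrite -ha; congr (_ - _); rewrite exchange_big /=; apply: eq_bigr => j _.
  by rewrite mxE scaler_suml; apply: eq_bigr => i _; rewrite scalerA.
have e2 : \sum_(m < size t) d m *: la m = E.
  have -> : \sum_(m < size t) d m *: la m =
      \sum_(m < size t) \sum_(j < size s') d m *: (t`_m ord0 j *: z j).
    by apply: eq_bigr => m _; rewrite /la scaler_sumr.
  rewrite exchange_big /=; apply: eq_bigr => j _.
  rewrite hd summxE scaler_suml; apply: eq_bigr => m _.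
  by rewrite mxE scalerA.
have -> : c = \sum_(i < size cs) a i *: ka i + \sum_(m < size t) d m *: la m.
  by rewrite e1 e2 subrK.
apply: lin_cat; exact: lin_sum.
Qed.

Lemma KF_noeth : noetherian A -> fg_module (V := M) (fun x : M => x \in b) ->
  forall y : B, exists ks : seq M,
  (forall k, k \in ks -> k \in b /\ y * k = 0) /\
  forall c : M, c \in b -> y * c = 0 -> lin ks c.
Proof.
move=> noe [cs hcs] y.
have hcsl : forall c, c \in b <-> lin cs c by move=> c; rewrite -lin_span.
have csb : forall c, c \in cs -> c \in b by move=> c hc; apply/hcsl/lin_mem.
have csb' (i : 'I_(size cs)) : cs`_i \in b by apply: csb; apply: mem_nth.
pose N (r : 'rV[A]_(size cs)) := \sum_(i < size cs) r ord0 i *: (y * cs`_i : M) = 0.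
have sN : submodule N.
  split; rewrite /N.
  - by rewrite big1 // => i _; rewrite mxE scale0r.
  - move=> r r' h h'.
    have -> : \sum_(i < size cs) (r + r') ord0 i *: (y * cs`_i : M) =
      \sum_(i < size cs) r ord0 i *: (y * cs`_i : M) + \sum_(i < size cs) r' ord0 i *: (y * cs`_i : M).
      by rewrite -big_split; apply: eq_bigr => i _; rewrite mxE scalerDl.
    by rewrite h h' addr0.
  - move=> a r h.
    have -> : \sum_(i < size cs) (a *: r) ord0 i *: (y * cs`_i : M) =
      a *: \sum_(i < size cs) r ord0 i *: (y * cs`_i : M).
      by rewrite scaler_sumr; apply: eq_bigr => i _; rewrite mxE scalerA.
    by rewrite h scaler0.
have [ws [ws1 ws2]] := noeth_sub noe sN.
pose lam (r : 'rV_(size cs)) : M := \sum_(i < size cs) r ord0 i *: cs`_i.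
exists (map lam ws); split.
  move=> k /mapP [w hw ->]; have Nw := ws1 w hw; split.
    by apply: in_b_sum => i; rewrite sE; apply: (IM hb).
  rewrite /lam mulr_sumr -[RHS]Nw; apply: eq_bigr => i _.
  by rewrite !sE mulrCA.
move=> c cb yc.
have [a ha] : in_span cs c by apply/lin_span/hcsl.
have Nr : N (\row_i a i).
  rewrite /N -[RHS]yc ha mulr_sumr; apply: eq_bigr => i _.
  by rewrite mxE !sE mulrCA.
have -> : c = lam (\row_i a i).
  by rewrite ha /lam; apply: eq_bigr => i _; rewrite mxE.
apply: lin_map; last exact: ws2.
  move=> r x x'; rewrite /lam scaler_sumr -big_split /=; apply: eq_bigr => i _.
  by rewrite !mxE scalerDl scalerA.
by rewrite /lam big1 // => i _; rewrite mxE scale0r.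
Qed.
End KF.


Theorem corollary4p15 (A B : comPzRingType) (f : {rmorphism A -> B})
  (b : {pred B}) (hb : is_ideal (fun x : B => x \in b))
  (* b_{S_m} = b B_{S_m} = 0 for every maximal m of A containing f^{-1}(b),
     where S_m = f(A \ m) + b *)
  (Hloc : forall m : A -> Prop, maximal_ideal m ->
     (forall a : A, f a \in b -> m a) ->
     forall (L : comPzRingType) (phi : {rmorphism B -> L}),
       is_localization (fun y : B => exists a c, [/\ ~ m a, c \in b & y = f a + c]) phi ->
       forall c : B, c \in b -> phi c = 0)
  (* B_n is a valuation domain for every maximal n of B not containing b *)
  (Hval : forall n : B -> Prop, maximal_ideal n ->
     ~ (forall c : B, c \in b -> n c) ->
     forall (L : comPzRingType) (phi : {rmorphism B -> L}),
       is_localization (fun y : B => ~ n y) phi -> valuation_domain L)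
  (* A semi-hereditary and b a coherent A-module, resp.
     A semi-hereditary Noetherian and b a finitely generated A-module *)
  (Hcase : (semi_hereditary A /\
              coherent_module (V := restr f) (fun x : restr f => x \in b))
        \/ [/\ semi_hereditary A, noetherian A &
              fg_module (V := restr f) (fun x : restr f => x \in b)]) :
  semi_hereditary (amalg f b hb).
Proof.
have bfg_of : fg_module (V := restr f) (fun x : restr f => x \in b) ->
    exists cs : seq (restr f), forall c : restr f, c \in b <-> lin cs c.
  by move=> [cs hcs]; exists cs => c; rewrite -lin_span.
case: Hcase => [[sh coh]|[sh noe fg]].
  apply: (@main_sh A B f b hb Hloc Hval sh (bfg_of (proj1 coh))).
  exact: KF_coh hb coh.
apply: (@main_sh A B f b hb Hloc Hval sh (bfg_of fg)).
exact: KF_noeth hb noe fg.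
Qed.
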